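(* Let $f\in{\rm elh}(\mathbb{C})$ be non-polynomial and $g\in{\rm elh}(\mathbb{C})$, suppose there is $h_1\in{\rm elh}(\mathbb{C})$ with $h_1\neq g$ and $f\circ h_1=f\circ g$, and let $t(z),h(z),L(w)$ be entire functions with $f(g(z)+we^{t(z)})=f(g(z))+e^{L(w)+h(z)}\sin\pi w$ for all $(z,w)\in\mathbb{C}^2$. Then for all $(z,w)\in\mathbb{C}^2$, $$(t'(z)-h'(z))f'(g(z)+we^{t(z)})+(g'(z)+wt'(z)e^{t(z)})f''(g(z)+we^{t(z)})=0.$$
   Context: ${\rm elh}(\mathbb{C})$ denotes the set of entire functions with nowhere vanishing derivative and derivative $1$ at $0$. *)

(* Defs.v *)
From Stdlib Require Import Reals.
From Coquelicot Require Import Coquelicot.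
Open Scope C_scope.

Definition cderiv (f : C -> C) (z : C) (l : C) : Prop :=
  @is_derive C_AbsRing C_NormedModule f z l.

Definition entire (f : C -> C) : Prop := forall z : C, exists l : C, cderiv f z l.

Definition elh (f : C -> C) : Prop :=
  exists f' : C -> C, (forall z, cderiv f z (f' z)) /\
    (forall z, f' z <> 0) /\ f' 0 = 1.

Definition is_polynomial (f : C -> C) : Prop :=
  exists (n : nat) (a : nat -> C),
    forall z : C, f z = sum_n (fun k => a k * pow_n z k) n.

Definition cexp (z : C) : C :=
  (exp (Re z) * cos (Im z), exp (Re z) * sin (Im z))%R.

Definition csin (z : C) : C :=
  (cexp (Ci * z) - cexp (- (Ci * z))) / (2 * Ci).

(* Main.v *)
From Stdlib Require Import Reals Lra.
From Coquelicot Require Import Coquelicot.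
Require Import Defs.
Open Scope R_scope.

Lemma dpl_bound f l : derivable_pt_lim f 0 l -> forall e, 0<e ->
  exists d, 0<d /\ forall h, Rabs h < d -> Rabs (f h - f 0 - l*h) <= e * Rabs h.
Proof.
intros H e He. destruct (H e He) as [d Hd]. exists d. split. apply cond_pos.
intros h Hh. destruct (Req_dec h 0) as [->|n].
- replace (f 0 - f 0 - l*0) with 0 by ring. rewrite Rabs_R0. lra.
- specialize (Hd h n Hh). rewrite Rplus_0_l in Hd.
  replace ((f h - f 0)/h - l) with ((f h - f 0 - l*h)/h) in Hd by (field; auto).
  unfold Rdiv in Hd. rewrite Rabs_mult, Rabs_inv in Hd.
  assert (0 < Rabs h) by (apply Rabs_pos_lt; auto).
  apply Rmult_lt_compat_r with (r := Rabs h) in Hd; auto.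
  rewrite Rmult_assoc, Rinv_l in Hd by lra. lra.
Qed.

Lemma Cmod_le_sum (z : C) : Cmod z <= Rabs (Re z) + Rabs (Im z).
Proof.
destruct z as [a b]. simpl.
replace (a,b) with (RtoC a + (0,b)%R)%C.
2:{ unfold RtoC, Cplus; simpl. f_equal; ring. }
eapply Rle_trans. apply Cmod_triangle. rewrite Cmod_R.
unfold Cmod; simpl. replace (0 * (0 * 1) + b * (b * 1)) with (Rsqr b) by (unfold Rsqr; ring). rewrite sqrt_Rsqr_abs. lra.
Qed.

Lemma cexp_deriv0 : is_derive (K:=C_AbsRing) cexp (RtoC 0) (RtoC 1).
Proof.
split. apply is_linear_scal_l.
intros x Hx. apply (@is_filter_lim_locally_unique C_AbsRing (AbsRing_NormedModule C_AbsRing)) in Hx. subst x.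
intros eps.
set (e1 := Rmin (eps/7) (1/2)).
assert (He1 : 0 < e1). { unfold e1. apply Rmin_pos. generalize (cond_pos eps); lra. lra. }
assert (He1a : e1 <= eps/7) by apply Rmin_l.
assert (He1b : e1 <= 1/2) by apply Rmin_r.
destruct (dpl_bound _ _ derivable_pt_lim_exp_0 e1 He1) as [d1 [Hd1 H1]].
destruct (dpl_bound _ _ derivable_pt_lim_sin_0 e1 He1) as [d2 [Hd2 H2]].
destruct (dpl_bound _ _ derivable_pt_lim_cos_0 e1 He1) as [d3 [Hd3 H3]].
rewrite exp_0, sin_0, cos_0 in *.
set (d := Rmin (Rmin d1 d2) (Rmin d3 e1)).
assert (Hd : 0 < d) by (unfold d; apply Rmin_pos; apply Rmin_pos; auto).
exists (mkposreal d Hd). intros [a b] Hab.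
change (Cmod ((a,b) - 0)%C < d) in Hab.
change (Cmod (Cminus (Cminus (cexp (a,b)) (cexp (RtoC 0))) (Cmult (Cminus (a,b) (RtoC 0)) (RtoC 1))) <= eps * Cmod (Cminus (a,b) (RtoC 0))).
assert (Hz: ((a,b) - 0)%C = (a,b)).
{ unfold Cminus, Cplus, Copp; simpl. f_equal; ring. }
rewrite Hz in Hab.
assert (Ea : Rabs a < d). { generalize (re_le_Cmod (a,b)); simpl; lra. }
assert (Eb : Rabs b < d). { generalize (Rmax_Cmod (a,b)); simpl. generalize (Rmax_r (Rabs a) (Rabs b)). lra. }
assert (d <= d1 /\ d <= d2 /\ d <= d3 /\ d <= e1) as [D1 [D2 [D3 D4]]].
{ unfold d. repeat split.
  - eapply Rle_trans; apply Rmin_l.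
  - eapply Rle_trans; [apply Rmin_l | apply Rmin_r].
  - eapply Rle_trans; [apply Rmin_r | apply Rmin_l].
  - eapply Rle_trans; apply Rmin_r. }
specialize (H1 a ltac:(lra)). specialize (H2 b ltac:(lra)). specialize (H3 b ltac:(lra)).
assert (F1: Rabs (exp a - 1 - a) <= e1*Rabs a) by (replace (exp a - 1 - a) with (exp a - 1 - 1*a) by ring; exact H1).
assert (F2: Rabs (sin b - b) <= e1*Rabs b) by (replace (sin b - b) with (sin b - 0 - 1*b) by ring; exact H2).
assert (F3: Rabs (cos b - 1) <= e1*Rabs b) by (replace (cos b - 1) with (cos b - 1 - 0*b) by ring; exact H3).
clear H1 H2 H3.
rewrite Hz.
assert (Hcm : Rabs a + Rabs b <= 2 * Cmod (a,b)).
{ generalize (re_le_Cmod (a,b)). generalize (Rmax_Cmod (a,b)). simpl.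
  intros Hm _. generalize (Rmax_l (Rabs a) (Rabs b)) (Rmax_r (Rabs a) (Rabs b)). lra. }
eapply Rle_trans. apply Cmod_le_sum.
unfold cexp, Cminus, Cplus, Copp, Cmult, RtoC; simpl.
rewrite exp_0, cos_0, sin_0.
assert (G1 : Rabs (exp a - 1) <= (1 + e1) * Rabs a).
{ replace (exp a - 1) with ((exp a - 1 - a) + a) by ring.
  eapply Rle_trans. apply Rabs_triang. lra. }
assert (G2 : Rabs (sin b) <= 2 * Rabs b).
{ replace (sin b) with ((sin b - b) + b) by ring.
  eapply Rle_trans. apply Rabs_triang. generalize (Rabs_pos b). nra. }
assert (G3 : Rabs (exp a) <= 2).
{ replace (exp a) with ((exp a - 1) + 1) by ring.
  eapply Rle_trans. apply Rabs_triang. rewrite Rabs_R1. generalize (Rabs_pos a). nra. }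
assert (R1 : Rabs (exp a * cos b + - (1 * 1) + - (a * 1 - b * 0)) <= e1 * Rabs a + 2 * e1 * Rabs b).
{ replace (exp a * cos b + - (1 * 1) + - (a * 1 - b * 0)) with
     ((exp a - 1 - a) + exp a * (cos b - 1)) by ring.
  eapply Rle_trans. apply Rabs_triang. rewrite Rabs_mult.
  assert (Rabs (exp a) * Rabs (cos b - 1) <= 2 * (e1 * Rabs b)).
  { apply Rmult_le_compat; auto using Rabs_pos. }
  lra. }
assert (R2 : Rabs (exp a * sin b + - (1 * 0) + - (a * 0 + b * 1)) <= 4 * e1 * Rabs b).
{ replace (exp a * sin b + - (1 * 0) + - (a * 0 + b * 1)) with
     ((exp a - 1) * sin b + (sin b - b)) by ring.
  eapply Rle_trans. apply Rabs_triang. rewrite Rabs_mult.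
  assert (Rabs (exp a - 1) * Rabs (sin b) <= ((1+e1)*Rabs a) * (2 * Rabs b)).
  { apply Rmult_le_compat; auto using Rabs_pos. }
  assert (Rabs a <= e1) by lra.
  assert ((1+e1)*Rabs a <= 3/2*e1) by (generalize (Rabs_pos a); nra).
  assert (((1+e1)*Rabs a)*(2*Rabs b) <= (3/2*e1)*(2*Rabs b)).
  { apply Rmult_le_compat_r; generalize (Rabs_pos b); lra. }
  lra. }
assert (Ca : Rabs a <= Cmod (a,b)) by (generalize (re_le_Cmod (a,b)); simpl; lra).
assert (Cb : Rabs b <= Cmod (a,b)).
{ generalize (Rmax_Cmod (a,b)); simpl. generalize (Rmax_r (Rabs a) (Rabs b)). lra. }
assert (e1 * Rabs a <= e1 * Cmod (a,b)) by (apply Rmult_le_compat_l; lra).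
assert (e1 * Rabs b <= e1 * Cmod (a,b)) by (apply Rmult_le_compat_l; lra).
assert (7 * e1 * Cmod (a,b) <= eps * Cmod (a,b)) by (apply Rmult_le_compat_r; [apply Cmod_ge_0| lra]).
lra.
Qed.

Ltac csimp := repeat (unfold plus, mult, scal, zero, one, minus, opp; simpl).

Lemma cexp_add (x y : C) : cexp (x + y)%C = (cexp x * cexp y)%C.
Proof.
destruct x as [a b], y as [c d]. unfold cexp, Cplus, Cmult; simpl.
rewrite exp_plus, cos_plus, sin_plus. f_equal; ring.
Qed.

Lemma cexp_neq0 (x : C) : cexp x <> RtoC 0.
Proof.
destruct x as [a b]. unfold cexp, RtoC; simpl. intros H. injection H. intros H1 H2.
generalize (exp_pos a) (sin2_cos2 b). intros Hp Hs.
apply Rmult_integral in H1. apply Rmult_integral in H2.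
destruct H1 as [H1|H1]; [lra|]. destruct H2 as [H2|H2]; [lra|].
unfold Rsqr in Hs. rewrite H1, H2 in Hs. lra.
Qed.


Lemma toA f x l : is_derive (K:=C_AbsRing) (V:=C_NormedModule) f x l -> is_derive (K:=C_AbsRing) (V:=AbsRing_NormedModule C_AbsRing) f x l.
Proof. intros [H1 H2]. split. destruct H1 as [a b c]. split; auto. exact H2. Qed.
Lemma toC f x l : is_derive (K:=C_AbsRing) (V:=AbsRing_NormedModule C_AbsRing) f x l -> is_derive (K:=C_AbsRing) (V:=C_NormedModule) f x l.
Proof. intros [H1 H2]. split. destruct H1 as [a b c]. split; auto. exact H2. Qed.

Notation dA f x l := (is_derive (K:=C_AbsRing) (V:=AbsRing_NormedModule C_AbsRing) f x l).

Lemma dA_eq f x l l' : dA f x l -> l = l' -> dA f x l'.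
Proof. intros H ->; exact H. Qed.

Lemma cexp_deriv (z : C) : dA cexp z (cexp z).
Proof.
assert (H1 := is_derive_minus (K:=C_AbsRing) (fun y : C_AbsRing => y) (fun _ => z) z one zero (is_derive_id z) (is_derive_const (V:=AbsRing_NormedModule C_AbsRing) z z)).
assert (H0 : dA cexp (minus z z) (RtoC 1)).
{ rewrite minus_eq_zero. exact (toA _ _ _ cexp_deriv0). }
assert (H2 := is_derive_comp (V:=AbsRing_NormedModule C_AbsRing) cexp (fun y : C_AbsRing => minus y z) z _ _ H0 H1).
assert (H3 := is_derive_mult (K:=C_AbsRing) (fun _ => cexp z) (fun y => cexp (minus y z)) z _ _ (is_derive_const (V:=AbsRing_NormedModule C_AbsRing) (cexp z) z) H2 ltac:(intros; apply Cmult_comm)).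
eapply is_derive_ext in H3.
- eapply dA_eq. exact H3.
  rewrite minus_eq_zero. csimp. unfold cexp; simpl. rewrite exp_0, cos_0, sin_0.
  destruct (cexp z) as [p q]. unfold Cmult, Cplus; simpl. f_equal; ring.
- intros y. simpl. csimp. rewrite <- cexp_add. f_equal. 
  destruct y, z. unfold Cplus; simpl. f_equal; ring.
Qed.
Open Scope C_scope.
Ltac csimpH H := repeat (unfold plus, mult, scal, zero, one, minus, opp in H; simpl in H).

Notation AN := (AbsRing_NormedModule C_AbsRing).

Ltac eqring Eq := match type of Eq with ?d1 = ?d2 => transitivity d1; [ring | transitivity d2; [exact Eq | ring]] end.

Theorem proposition3p32
  (f g h1 t h L : C -> C)
  (Hf : elh f) (Hfnp : ~ is_polynomial f)
  (Hg : elh g)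
  (Hh1 : elh h1) (Hh1g : h1 <> g) (Hfh1 : forall z, f (h1 z) = f (g z))
  (Ht : entire t) (Hh : entire h) (HL : entire L)
  (Hfun : forall z w : C,
      f (g z + w * cexp (t z)) =
      f (g z) + cexp (L w + h z) * csin (RtoC PI * w))
  (f' f'' g' t' h' : C -> C)
  (Hf' : forall z, cderiv f z (f' z))
  (Hf'' : forall z, cderiv f' z (f'' z))
  (Hg' : forall z, cderiv g z (g' z))
  (Ht' : forall z, cderiv t z (t' z))
  (Hh' : forall z, cderiv h z (h' z)) :
  forall z w : C,
    (t' z - h' z) * f' (g z + w * cexp (t z))
    + (g' z + w * t' z * cexp (t z)) * f'' (g z + w * cexp (t z)) = 0.
Proof.
assert (cm : forall n m : C_AbsRing, mult n m = mult m n) by (intros; apply Cmult_comm).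
assert (Af : forall z, dA f z (f' z)) by (intros; apply toA; apply Hf').
assert (Af' : forall z, dA f' z (f'' z)) by (intros; apply toA; apply Hf'').
assert (Ag : forall z, dA g z (g' z)) by (intros; apply toA; apply Hg').
assert (At : forall z, dA t z (t' z)) by (intros; apply toA; apply Ht').
assert (Ah : forall z, dA h z (h' z)) by (intros; apply toA; apply Hh').
assert (HE : forall z, dA (fun z => cexp (t z)) z (t' z * cexp (t z))).
{ intros z. exact (is_derive_comp (V:=AN) cexp t z _ _ (cexp_deriv (t z)) (At z)). }
assert (Key : forall z0 w0, f' (g z0 + w0*cexp(t z0)) * (g' z0 + w0*t' z0*cexp(t z0))
   = f'(g z0)*g' z0 + h' z0 * (f (g z0 + w0*cexp(t z0)) - f (g z0))).
{ intros z0 w0.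
  assert (Di := is_derive_plus (V:=AN) g (fun z => mult w0 (cexp (t z))) z0 _ _ (Ag z0)
     (is_derive_mult (fun _ => w0) (fun z => cexp (t z)) z0 _ _ (is_derive_const (V:=AN) w0 z0) (HE z0) cm)).
  assert (D1 := is_derive_comp (V:=AN) f _ z0 _ _ (Af _) Di).
  assert (Dl := is_derive_plus (V:=AN) (fun _ => L w0) h z0 _ _ (is_derive_const (V:=AN) (L w0) z0) (Ah z0)).
  assert (Dc := is_derive_comp (V:=AN) cexp _ z0 _ _ (cexp_deriv _) Dl).
  assert (D2 := is_derive_plus (V:=AN) (fun z => f (g z)) (fun z => mult (cexp (plus (L w0) (h z))) (csin (RtoC PI * w0))) z0 _ _
     (is_derive_comp (V:=AN) f g z0 _ _ (Af _) (Ag z0))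
     (is_derive_mult _ (fun _ => csin (RtoC PI * w0)) z0 _ _ Dc (is_derive_const (V:=AN) _ z0) cm)).
  eapply is_derive_ext in D1.
  2:{ intros z. simpl. exact (Hfun z w0). }
  apply toC, is_C_derive_unique in D1. apply toC, is_C_derive_unique in D2.
  assert (Eq := eq_trans (eq_sym D1) D2). clear D1 D2. csimp. csimpH Eq. csimp.
  rewrite (Hfun z0 w0). eqring Eq. }
intros z w.
set (E := cexp (t z)).
assert (HEn : E <> RtoC 0) by apply cexp_neq0.
assert (Di := is_derive_plus (V:=AN) (fun _ => g z) (fun w => mult w E) w _ _ (is_derive_const (V:=AN) (g z) w)
     (is_derive_mult (fun w => w) (fun _ => E) w _ _ (is_derive_id w) (is_derive_const (V:=AN) E w) cm)).
assert (DA := is_derive_mult _ (fun w => plus (g' z) (mult (mult w (t' z)) E)) w _ _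
   (is_derive_comp (V:=AN) f' _ w _ _ (Af' _) Di)
   (is_derive_plus (V:=AN) (fun _ => g' z) (fun w => mult (mult w (t' z)) E) w _ _ (is_derive_const (V:=AN) (g' z) w)
     (is_derive_mult (fun w => mult w (t' z)) (fun _ => E) w _ _
        (is_derive_mult (fun w => w) (fun _ => t' z) w _ _ (is_derive_id w) (is_derive_const (V:=AN) (t' z) w) cm)
        (is_derive_const (V:=AN) E w) cm)) cm).
assert (DB := is_derive_plus (V:=AN) (fun _ => f' (g z) * g' z) (fun w => mult (h' z) (minus (f (plus (g z) (mult w E))) (f (g z)))) w _ _
   (is_derive_const (V:=AN) _ w)
   (is_derive_mult (fun _ => h' z) (fun w => minus (f (plus (g z) (mult w E))) (f (g z))) w _ _
      (is_derive_const (V:=AN) _ w)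
      (is_derive_minus (V:=AN) (fun w => f (plus (g z) (mult w E))) (fun _ => f (g z)) w _ _
          (is_derive_comp (V:=AN) f _ w _ _ (Af _) Di) (is_derive_const (V:=AN) _ w)) cm)).
eapply is_derive_ext in DA.
2:{ intros v. simpl. exact (Key z v). }
apply toC, is_C_derive_unique in DA. apply toC, is_C_derive_unique in DB.
assert (Eq := eq_trans (eq_sym DA) DB). clear DA DB. csimp. csimpH Eq.
match goal with |- ?X = _ => assert (HX : E * X = RtoC 0) end.
{ match type of Eq with ?d1 = ?d2 => transitivity (d1 - d2); [ring | rewrite Eq; ring] end. }
match goal with |- ?X = _ => replace X with (/ E * (E * X)) by (field; exact HEn) end.
rewrite HX. ring.
Qed.
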